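(* For any unit types $U,V$ and any types $T,R$: if $V\to R\preceq U\to T$, then there exist unit types $\vec W=W_1,\dots,W_n$ and type variables $\vec X=X_1,\dots,X_n$ such that $U\to T\equiv(V\to R)[\vec W/\vec X]$.
   Context: Fix a commutative ring $(\mathcal S,+,\times)$. Types: $T ::= U \mid \forall X.T \mid \alpha.T \mid \overline0$; unit types: $U ::= X \mid U\to T \mid \forall X.U$ ($\alpha\in\mathcal S$, $X$ type variables). Type variables are only substituted by unit types; $T[\vec W/\vec X]$ means $T[W_1/X_1]\cdots[W_n/X_n]$ and $(\alpha.T)[U/X]=\alpha.T[U/X]$. Type equivalence $\equiv$ is the least congruence with $\alpha.\overline0\equiv\overline0$, $0.T\equiv\overline0$, $1.T\equiv T$, $\alpha.(\beta.T)\equiv(\alpha\times\beta).T$, $\forall X.\alpha.T\equiv\alpha.\forall X.T$. Write $T\prec R$ if either $R\equiv\forall X.T$ for some $X$, or $T\equiv\forall X.S$ and $R\equiv S[U/X]$ for some type $S$ and unit type $U$; $\preceq$ is the reflexive and transitive closure of $\prec$. *)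

(* Defs.v *)
(* Types of the calculus, in de Bruijn representation
   (types are identified up to alpha-conversion, as in the paper). *)
From HB Require Import structures.
From mathcomp Require Import all_boot all_algebra.
Set Implicit Arguments. Unset Strict Implicit. Unset Printing Implicit Defensive.
Import GRing.Theory.
Local Open Scope ring_scope.

Section Types.
Variable S : comPzRingType.

Inductive ty : Type :=
| TVar  : nat -> ty
| TArr  : ty -> ty -> ty
| TAll  : ty -> ty
| TScal : S -> ty -> ty
| TZero : ty.

Fixpoint is_unit (t : ty) : bool :=
  match t with
  | TVar _ => true
  | TArr u r => is_unit u && is_type r
  | TAll u => is_unit u
  | _ => false
  end
with is_type (t : ty) : bool :=
  match t with
  | TVar _ => true
  | TArr u r => is_unit u && is_type r
  | TAll r => is_type r
  | TScal _ r => is_type r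
  | TZero => true
  end.

Definition upren (f : nat -> nat) (k : nat) : nat :=
  if k is k'.+1 then (f k').+1 else 0%N.

Fixpoint ren (f : nat -> nat) (t : ty) : ty :=
  match t with
  | TVar k => TVar (f k)
  | TArr u r => TArr (ren f u) (ren f r)
  | TAll r => TAll (ren (upren f) r)
  | TScal a r => TScal a (ren f r)
  | TZero => TZero
  end.

Definition upsub (sg : nat -> ty) (k : nat) : ty :=
  if k is k'.+1 then ren succn (sg k') else TVar 0.

Fixpoint subst (sg : nat -> ty) (t : ty) : ty :=
  match t with
  | TVar k => sg k
  | TArr u r => TArr (subst sg u) (subst sg r)
  | TAll r => TAll (subst (upsub sg) r)
  | TScal a r => TScal a (subst sg r)
  | TZero => TZero
  end.

Definition subst1 (t : ty) (u : ty) (X : nat) : ty :=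
  subst (fun k => if k == X then u else TVar k) t.

(* forall X. T : bind the free type variable X of T *)
Definition tall (X : nat) (t : ty) : ty :=
  TAll (ren (fun k => if k == X then 0%N else k.+1) t) .

Definition msubst (t : ty) (Ws : seq ty) (Xs : seq nat) : ty :=
  foldl (fun acc p => subst1 acc p.1 p.2) t (zip Ws Xs).

Inductive teq : ty -> ty -> Prop :=
| teq_refl t : is_type t -> teq t t
| teq_sym t r : teq t r -> teq r t
| teq_trans t r q : teq t r -> teq r q -> teq t q
| teq_arr u u' t t' : is_unit u -> is_unit u' -> teq u u' -> teq t t' ->
    teq (TArr u t) (TArr u' t')
| teq_all t t' : teq t t' -> teq (TAll t) (TAll t')
| teq_scal a t t' : teq t t' -> teq (TScal a t) (TScal a t')
| teq_scal_zero a : teq (TScal a TZero) TZero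
| teq_zero_scal t : is_type t -> teq (TScal 0 t) TZero
| teq_one_scal t : is_type t -> teq (TScal 1 t) t
| teq_scal_scal a b t : is_type t -> teq (TScal a (TScal b t)) (TScal (a * b) t)
| teq_all_scal a t : is_type t -> teq (TAll (TScal a t)) (TScal a (TAll t)).

Definition prec (t r : ty) : Prop :=
  is_type t /\ is_type r /\
  ((exists X : nat, teq r (tall X t)) \/
   (exists (X : nat) (s u : ty), is_type s /\ is_unit u /\
      teq t (tall X s) /\ teq r (subst1 s u X))).

Inductive preceq : ty -> ty -> Prop :=
| preceq_refl t : preceq t t
| preceq_step t r q : prec t r -> preceq r q -> preceq t q.

End Types.

(* Main.v *)
Require Import Defs.
From mathcomp Require Import all_boot all_algebra zify.
Set Implicit Arguments. Unset Strict Implicit. Unset Printing Implicit Defensive.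
Import GRing.Theory.
Local Open Scope ring_scope.

Section Lemmas.
Variable S : comPzRingType.
Local Notation ty := (ty S).
Local Notation TV := (TVar S).
Local Notation TZ := (TZero S).

Lemma ren_ext (f g : nat -> nat) (t : ty) : f =1 g -> ren f t = ren g t.
Proof.
elim: t f g => [k|u IHu r IHr|r IHr|a r IHr|] f g E /=.
- by rewrite E.
- by rewrite (IHu f g E) (IHr f g E).
- by rewrite (IHr (upren f) (upren g)) // => -[|k] //=; rewrite E.
- by rewrite (IHr f g E).
- by [].
Qed.

Lemma subst_ext (f g : nat -> ty) (t : ty) : f =1 g -> subst f t = subst g t.
Proof.
elim: t f g => [k|u IHu r IHr|r IHr|a r IHr|] f g E /=.
- by rewrite E.
- by rewrite (IHu f g E) (IHr f g E).
- by rewrite (IHr (upsub f) (upsub g)) // => -[|k] //=; rewrite E.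
- by rewrite (IHr f g E).
- by [].
Qed.

Lemma ren_ren (f g : nat -> nat) (t : ty) : ren f (ren g t) = ren (f \o g) t.
Proof.
elim: t f g => [k|u IHu r IHr|r IHr|a r IHr|] f g //=.
- by rewrite IHu IHr.
- by rewrite IHr; congr TAll; apply: ren_ext => -[|k].
- by rewrite IHr.
Qed.

Lemma subst_ren (f : nat -> nat) (sg : nat -> ty) (t : ty) :
  subst sg (ren f t) = subst (sg \o f) t.
Proof.
elim: t f sg => [k|u IHu r IHr|r IHr|a r IHr|] f sg //=.
- by rewrite IHu IHr.
- by rewrite IHr; congr TAll; apply: subst_ext => -[|k].
- by rewrite IHr.
Qed.

Lemma ren_subst (f : nat -> nat) (sg : nat -> ty) (t : ty) :
  ren f (subst sg t) = subst (ren f \o sg) t.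
Proof.
elim: t f sg => [k|u IHu r IHr|r IHr|a r IHr|] f sg //=.
- by rewrite IHu IHr.
- rewrite IHr; congr TAll; apply: subst_ext => -[|k] //=.
  by rewrite !ren_ren; apply: ren_ext.
- by rewrite IHr.
Qed.

Lemma subst_subst (f g : nat -> ty) (t : ty) :
  subst f (subst g t) = subst (subst f \o g) t.
Proof.
elim: t f g => [k|u IHu r IHr|r IHr|a r IHr|] f g //=.
- by rewrite IHu IHr.
- rewrite IHr; congr TAll; apply: subst_ext => -[|k] //=.
  by rewrite subst_ren ren_subst; apply: subst_ext.
- by rewrite IHr.
Qed.

Lemma subst_id (t : ty) : subst TV t = t.
Proof.
elim: t => [k|u IHu r IHr|r IHr|a r IHr|] //=.
- by rewrite IHu IHr.
- by rewrite (@subst_ext _ TV) ?IHr // => -[|k].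
- by rewrite IHr.
Qed.


Lemma unit_type (t : ty) : is_unit t -> is_type t.
Proof. by elim: t => //= r IH; apply: IH. Qed.

Lemma ren_wf (t : ty) : forall f,
  (is_unit t -> is_unit (ren f t)) /\ (is_type t -> is_type (ren f t)).
Proof.
elim: t => [k|u IHu r IHr|r IHr|a r IHr|] f //=.
- by split=> /andP[/(proj1 (IHu f)) -> /(proj2 (IHr f)) ->].
- by split=> // H; exact: (proj2 (IHr f) H).
Qed.

Lemma subst_wf (t : ty) : forall sg, (forall k, is_unit (sg k)) ->
  (is_unit t -> is_unit (subst sg t)) /\ (is_type t -> is_type (subst sg t)).
Proof.
elim: t => [k|u IHu r IHr|r IHr|a r IHr|] sg Hs //=.
- by split=> // _; apply: unit_type.
- by split=> /andP[/(proj1 (IHu sg Hs)) -> /(proj2 (IHr sg Hs)) ->].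
- have Hs' : forall k, is_unit (upsub sg k).
    by case=> //= k; apply: (proj1 (ren_wf _ _)).
  by split; [apply: (proj1 (IHr _ Hs'))|apply: (proj2 (IHr _ Hs'))].
- by split=> //; apply: (proj2 (IHr _ Hs)).
Qed.

Definition atomic (x : ty) : bool :=
  match x with TZero => false | TScal _ _ => false | _ => true end.
Definition mk (a : S) (y : ty) : ty :=
  if a == 0 then TZ else if a == 1 then y else TScal a y.
Arguments mk : simpl never.
Definition mkAll (x : ty) : ty :=
  match x with TZero => TZ | TScal c y => TScal c (TAll y) | y => TAll y end.
Definition mkScal (a : S) (x : ty) : ty :=
  match x with TZero => TZ | TScal c y => mk (a * c) y | y => mk a y end.
Fixpoint cf (t : ty) : ty :=
  match t with
  | TVar k => TV k
  | TArr u r => TArr (cf u) (cf r)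
  | TAll r => mkAll (cf r)
  | TScal a r => mkScal a (cf r)
  | TZero => TZ
  end.


Lemma atomic_ren f x : atomic (ren f x) = atomic x.
Proof. by case: x. Qed.

Lemma mkAll_atomic z : atomic z -> mkAll z = TAll z.
Proof. by case: z. Qed.

Lemma mkScal_atomic a z : atomic z -> mkScal a z = mk a z.
Proof. by case: z. Qed.

Lemma mk_ren f a y : ren f (mk a y) = mk a (ren f y).
Proof. by rewrite /mk; case: ifP => // _; case: ifP. Qed.

Lemma mk_subst sg a y : subst sg (mk a y) = mk a (subst sg y).
Proof. by rewrite /mk; case: ifP => // _; case: ifP. Qed.

Lemma mkAll_ren f x : ren f (mkAll x) = mkAll (ren (upren f) x).
Proof. by case: x. Qed.

Lemma mkScal_ren f a x : ren f (mkScal a x) = mkScal a (ren f x).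
Proof. by case: x => * //=; rewrite ?mk_ren. Qed.

Lemma cf_ren f t : cf (ren f t) = ren f (cf t).
Proof.
elim: t f => [k|u IHu r IHr|r IHr|a r IHr|] f //=.
- by rewrite IHu IHr.
- by rewrite IHr mkAll_ren.
- by rewrite IHr mkScal_ren.
Qed.

Lemma mkAll_subst sg x : (forall k, atomic (sg k)) ->
  subst sg (mkAll x) = mkAll (subst (upsub sg) x).
Proof.
move=> Ha; case: x => //= k; rewrite mkAll_atomic //.
by case: k => //= k; rewrite atomic_ren.
Qed.

Lemma mkScal_subst sg a x : (forall k, atomic (sg k)) ->
  subst sg (mkScal a x) = mkScal a (subst sg x).
Proof.
move=> Ha; case: x => [k|u r|r|c y|] /=; rewrite ?mk_subst //.
by rewrite mkScal_atomic.
Qed.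

Lemma cf_subst sg t : (forall k, atomic (cf (sg k))) ->
  cf (subst sg t) = subst (cf \o sg) (cf t).
Proof.
elim: t sg => [k|u IHu r IHr|r IHr|a r IHr|] sg Ha //=.
- by rewrite IHu // IHr.
- rewrite IHr; last by case=> //= k; rewrite cf_ren atomic_ren.
  rewrite mkAll_subst //; congr mkAll; apply: subst_ext => -[|k] //=.
  by rewrite cf_ren.
- by rewrite IHr // mkScal_subst.
Qed.

Definition canon (x : ty) : bool :=
  match x with TScal c y => [&& c != 0, c != 1 & atomic y] | _ => true end.

Lemma canon_mk a y : atomic y -> canon (mk a y).
Proof.
move=> Hy; rewrite /mk; case: ifP => // H0; case: ifP => [_|H1] /=; first by case: y Hy.
by rewrite H0 H1 Hy.
Qed.

Lemma canon_cf t : canon (cf t).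
Proof.
elim: t => [k|u _ r _|r IHr|a r IHr|] //=.
- by case: (cf r) IHr => //= c y /and3P[-> -> _].
- case: (cf r) IHr => [k|u r'|r'|c y|] //= H; apply: canon_mk => //; by case/and3P: H.
Qed.

Lemma canon_cases x : canon x ->
  x = TZ \/ (exists c y, x = TScal c y /\ c != 0 /\ c != 1 /\ atomic y) \/ atomic x.
Proof.
case: x => [k|u r|r|c y|] /=; try by right; right.
- by move=> /and3P[? ? ?]; right; left; exists c, y.
- by left.
Qed.

Lemma mk0 y : mk 0 y = TZ.
Proof. by rewrite /mk eqxx. Qed.

Lemma mkScal_mk a c y : atomic y -> mkScal a (mk c y) = mk (a * c) y.
Proof.
move=> Hy; rewrite /mk; case: eqP => [->|_]; first by rewrite mulr0 eqxx.
case: eqP => [->|_]; first by rewrite mulr1 mkScal_atomic.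
by [].
Qed.

Lemma mkAll_mk c y : atomic y -> mkAll (mk c y) = mk c (TAll y).
Proof.
move=> Hy; rewrite /mk; case: eqP => // _; case: eqP => // _.
by rewrite mkAll_atomic.
Qed.

Lemma teq_sound (H10 : (1 : S) != 0) t r : teq t r -> cf t = cf r.
Proof.
elim=> {t r} //=.
- by move=> t r q _ -> _ ->.
- by move=> u u' t t' _ _ _ -> _ ->.
- by move=> t t' _ ->.
- by move=> a t t' _ ->.
- move=> t _; case: (canon_cases (canon_cf t)) => [->|[[c [y [-> _]]]|Ha]] //=.
    by rewrite mul0r mk0.
  by rewrite mkScal_atomic // mk0.
- move=> t _; case: (canon_cases (canon_cf t)) => [->|[[c [y [-> [H0 [H1 Hy]]]]]|Ha]] //=.
    by rewrite mul1r /mk (negbTE H0) (negbTE H1).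
  by rewrite mkScal_atomic // /mk (negbTE H10) eqxx.
- move=> a b t _; case: (canon_cases (canon_cf t)) => [->|[[c [y [-> [H0 [H1 Hy]]]]]|Ha]] //=.
    by rewrite mkScal_mk // mulrA.
  by rewrite (mkScal_atomic b Ha) mkScal_mk // mkScal_atomic.
- move=> a t _; case: (canon_cases (canon_cf t)) => [->|[[c [y [-> [H0 [H1 Hy]]]]]|Ha]] //=.
    by rewrite mkAll_mk.
  by rewrite (mkScal_atomic a Ha) mkAll_mk // (mkAll_atomic Ha) mkScal_atomic.
Qed.


Lemma teq_wf (t r : ty) : teq t r -> is_type t /\ is_type r.
Proof.
elim=> {t r} //=.
- by move=> t r _ [].
- by move=> t r q _ [] ? _ _ [].
- by move=> u u' t t' -> -> _ _ _ [-> ->].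
Qed.

Lemma is_type_mk a y : is_type y -> is_type (mk a y).
Proof. by rewrite /mk; case: ifP => // _; case: ifP. Qed.

Lemma cf_wf (t : ty) : (is_unit t -> is_unit (cf t) && atomic (cf t)) /\
                (is_type t -> is_type (cf t)).
Proof.
elim: t => [k|u [IHu1 IHu2] r [IHr1 IHr2]|r [IHr1 IHr2]|a r [IHr1 IHr2]|] //=.
- split; move=> /andP[/IHu1/andP[-> _] /IHr2 ->] //.
- split.
    by move=> /IHr1 /andP[H1 H2]; rewrite mkAll_atomic //= H1.
  move=> /IHr2; case: (cf r) => //.
- split=> // /IHr2; case: (cf r) => //= *; apply: is_type_mk => //.
Qed.

Lemma teq_mk a y : is_type y -> teq (TScal a y) (mk a y).
Proof.
move=> Hy; rewrite /mk; case: eqP => [->|_]; first exact: teq_zero_scal.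
case: eqP => [->|_]; first exact: teq_one_scal.
exact: teq_refl.
Qed.

Lemma teq_mkScal a x : is_type x -> teq (TScal a x) (mkScal a x).
Proof.
case: x => [k|u r|r|c y|] Hx /=; try exact: teq_mk.
- apply: teq_trans (teq_scal_scal _ _ _) (teq_mk _ _) => //.
- exact: teq_scal_zero.
Qed.

Lemma teq_mkAll x : is_type x -> teq (TAll x) (mkAll x).
Proof.
case: x => [k|u r|r|c y|] Hx /=; try exact: teq_refl.
- exact: teq_all_scal.
- apply: teq_trans (teq_all (teq_sym (teq_scal_zero 0))) _.
  apply: teq_trans (teq_all_scal _ _) _ => //.
  exact: teq_zero_scal.
Qed.

Lemma teq_cf (t : ty) : is_type t -> teq t (cf t).
Proof.
elim: t => [k|u IHu r IHr|r IHr|a r IHr|] //=; try by move=> *; apply: teq_refl.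
- move=> /andP[Hu Hr]; apply: teq_arr => //.
    by case/andP: ((proj1 (cf_wf u)) Hu).
  by apply: IHu; apply: unit_type.
  exact: IHr.
- move=> Hr; apply: teq_trans (teq_all (IHr Hr)) _.
  by apply: teq_mkAll; apply: (proj2 (cf_wf r)).
- move=> Hr; apply: teq_trans (teq_scal a (IHr Hr)) _.
  by apply: teq_mkScal; apply: (proj2 (cf_wf r)).
Qed.

Lemma teq_complete (t r : ty) : is_type t -> is_type r -> cf t = cf r -> teq t r.
Proof.
move=> Ht Hr E; apply: teq_trans (teq_cf Ht) _.
by rewrite E; apply: teq_sym; apply: teq_cf.
Qed.


End Lemmas.

Section Lemmas2.
Variable S : comPzRingType.
Local Notation ty := (ty S).
Local Notation TV := (TVar S).
Local Notation TZ := (TZero S).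
Fixpoint bnd (n : nat) (t : ty) : bool :=
  match t with
  | TVar k => (k < n)%N
  | TArr u r => bnd n u && bnd n r
  | TAll r => bnd n.+1 r
  | TScal _ r => bnd n r
  | TZero => true
  end.

Lemma bnd_mono (t : ty) : forall n m, bnd n t -> (n <= m)%N -> bnd m t.
Proof.
elim: t => [k|u IHu r IHr|r IHr|a r IHr|] n m //=.
- by move=> H1 H2; apply: leq_trans H1 H2.
- by move=> /andP[H1 H2] Hnm; rewrite (IHu n m H1 Hnm) (IHr n m H2 Hnm).
- by move=> H Hnm; apply: (IHr n.+1 m.+1 H).
- by move=> H Hnm; apply: (IHr n m H).
Qed.

Lemma bnd_exists (t : ty) : exists n, bnd n t.
Proof.
elim: t => [k|u [n1 H1] r [n2 H2]|r [n H]|a r [n H]|] /=.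
- by exists k.+1.
- exists (maxn n1 n2); rewrite (bnd_mono H1 (leq_maxl n1 n2)).
  by rewrite (bnd_mono H2 (leq_maxr n1 n2)).
- by exists n; apply: (bnd_mono H).
- by exists n.
- by exists 0%N.
Qed.

Lemma subst_ext_bnd (t : ty) : forall n (f g : nat -> ty), bnd n t ->
  (forall k, (k < n)%N -> f k = g k) -> subst f t = subst g t.
Proof.
elim: t => [k|u IHu r IHr|r IHr|a r IHr|] n f g //=.
- by move=> H E; apply: E.
- by move=> /andP[H1 H2] E; rewrite (IHu n f g) // (IHr n f g).
- move=> H E; rewrite (IHr n.+1 (upsub f) (upsub g)) // => -[|k] //= Hk.
  by rewrite E.
- by move=> H E; rewrite (IHr n f g).
Qed.

Lemma bnd_fun (sg : nat -> ty) B : exists M, forall k, (k < B)%N -> bnd M (sg k).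
Proof.
elim: B => [|B [M HM]]; first by exists 0%N.
have [m Hm] := bnd_exists (sg B).
exists (maxn M m) => k; rewrite ltnS leq_eqVlt => /orP[/eqP ->|Hk].
  by apply: (bnd_mono Hm); rewrite leq_maxr.
by apply: (bnd_mono (HM k Hk)); rewrite leq_maxl.
Qed.

Definition F1 (acc : ty) (p : ty * nat) : ty := subst1 acc p.1 p.2.

Lemma msubst_foldl (t : ty) (ps : seq (ty * nat)) :
  msubst t (map fst ps) (map snd ps) = foldl F1 t ps.
Proof. by rewrite /msubst zip_unzip. Qed.


Lemma step1 (C : ty) N M : (N <= M)%N -> forall j, (j <= N)%N ->
  foldl F1 C [seq (TV (M + k), k) | k <- iota 0 j] =
  subst (fun k => if (k < j)%N then TV (M + k) else TV k) C.
Proof.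
move=> HNM; elim=> [|j IH] Hj.
  by rewrite /= -{1}(subst_id C); apply: subst_ext => k.
rewrite -addn1 iotaD map_cat foldl_cat IH; last by apply: ltnW.
rewrite /= /F1 /subst1 /= subst_subst; apply: subst_ext => k /=.
rewrite add0n addn1.
case: (ltnP k j) => H1 /=.
  rewrite (_ : (k < j.+1)%N = true); last by lia.
  rewrite (_ : (M + k == j) = false) //; apply/eqP; lia.
case: (eqVneq k j) => [->|H2]; first by rewrite ltnSn.
rewrite (_ : (k < j.+1)%N = false) //; lia.
Qed.

Lemma step2 (C : ty) (sg : nat -> ty) N M : (N <= M)%N -> bnd N C ->
  (forall k, (k < N)%N -> bnd M (sg k)) -> forall j, (j <= N)%N ->
  foldl F1 (subst (fun k => if (k < N)%N then TV (M + k) else TV k) C)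
    [seq (sg k, M + k) | k <- iota 0 j] =
  subst (fun k => if (k < j)%N then sg k
                  else if (k < N)%N then TV (M + k) else TV k) C.
Proof.
move=> HNM HC Hs; elim=> [|j IH] Hj.
  by apply: subst_ext => k.
rewrite -addn1 iotaD map_cat foldl_cat IH; last by apply: ltnW.
rewrite /= /F1 /subst1 /= subst_subst; apply: (subst_ext_bnd HC) => k Hk /=.
rewrite add0n addn1.
case: (ltnP k j) => H1.
  rewrite (_ : (k < j.+1)%N = true); last by lia.
  rewrite -{2}(subst_id (sg k)); apply: (subst_ext_bnd (Hs k Hk)) => m Hm.
  by rewrite ifF //; apply/eqP; lia.
rewrite Hk /=.
case: (eqVneq k j) => [->|H2]; first by rewrite eqxx ltnSn.
rewrite ifF; last by apply/eqP; lia.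
rewrite (_ : (k < j.+1)%N = false) //; lia.
Qed.


Lemma simul (C : ty) (sg : nat -> ty) :
  (forall k, is_unit (sg k) /\ cf (sg k) = sg k) ->
  exists Ws Xs, size Ws = size Xs /\ all (@is_unit S) Ws /\
    map (@cf S) Ws = Ws /\ msubst C Ws Xs = subst sg C.
Proof.
move=> Hs.
have [N HN] := bnd_exists C.
have [M0 HM0] := bnd_fun sg N.
pose M := maxn M0 N.
have HNM : (N <= M)%N := leq_maxr _ _.
have HsM : forall k, (k < N)%N -> bnd M (sg k).
  by move=> k Hk; apply: (bnd_mono (HM0 k Hk)); apply: leq_maxl.
pose ps := [seq (TV (M + k), k) | k <- iota 0 N] ++
           [seq (sg k, M + k) | k <- iota 0 N].
exists (map fst ps), (map snd ps); split; first by rewrite !size_map.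
rewrite msubst_foldl foldl_cat (step1 C HNM (leqnn N)) (step2 HNM HN HsM (leqnn N)).
split; [|split].
- rewrite /ps map_cat all_cat !all_map; apply/andP; split;
    apply/allP => k _ //=.
  exact: (proj1 (Hs k)).
- rewrite /ps !map_cat -!map_comp; congr (_ ++ _); apply: eq_map => k //=.
  exact: (proj2 (Hs k)).
- by apply: (subst_ext_bnd HN) => k Hk; rewrite Hk.
Qed.


Lemma ren_iterAll n : forall f (x : ty),
  ren f (iter n (@TAll S) x) = iter n (@TAll S) (ren (iter n upren f) x).
Proof. elim: n => // n IH f x; rewrite iterS /= IH; congr TAll; by rewrite -iterSr iterS. Qed.

Lemma subst_iterAll n : forall sg (x : ty),
  subst sg (iter n (@TAll S) x) = iter n (@TAll S) (subst (iter n (@upsub S) sg) x).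
Proof. elim: n => // n IH f x; rewrite iterS /= IH; congr TAll; by rewrite -iterSr iterS. Qed.

Definition Qt (x : ty) := is_unit x /\ cf x = x.
Definition Qf (sg : nat -> ty) := forall k, Qt (sg k).

Lemma Q_ren f x : Qt x -> Qt (ren f x).
Proof.
move=> [H1 H2]; split; first exact: (proj1 (ren_wf x f) H1).
by rewrite cf_ren H2.
Qed.

Lemma Q_TV k : Qt (TV k).
Proof. by []. Qed.

Lemma Q_upsub sg : Qf sg -> Qf (@upsub S sg).
Proof. by move=> H [|k] //=; apply: Q_ren. Qed.

Lemma Q_iter_upsub m sg : Qf sg -> Qf (iter m (@upsub S) sg).
Proof. by elim: m => //= m IH H; apply: Q_upsub; apply: IH. Qed.

Lemma Q_atomic x : Qt x -> atomic (cf x).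
Proof. by move=> [H1 H2]; case/andP: (proj1 (cf_wf x) H1). Qed.

Lemma Q_subst sg x : Qf sg -> Qt x -> Qt (subst sg x).
Proof.
move=> Hs [H1 H2]; split.
  exact: (proj1 (subst_wf x (fun k => proj1 (Hs k))) H1).
rewrite cf_subst; last by move=> k; apply: Q_atomic.
rewrite H2; apply: subst_ext => k /=; exact: (proj2 (Hs k)).
Qed.

Lemma cf_Q (H10 : (1 : S) != 0) u : is_unit u -> Qt (cf u).
Proof.
move=> Hu; split; first by case/andP: (proj1 (cf_wf u) Hu).
by rewrite -(teq_sound H10 (teq_cf (unit_type Hu))).
Qed.

Definition Pinv (C t : ty) :=
  exists n (sg : nat -> ty), Qf sg /\ cf t = iter n (@TAll S) (subst sg C).

Lemma gen_step (H10 : (1 : S) != 0) (A B t r : ty) X :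
  Pinv (TArr A B) t -> teq r (tall X t) -> Pinv (TArr A B) r.
Proof.
move=> [n [sg [Hs E]]] Hr.
rewrite /Pinv (teq_sound H10 Hr) /tall /= cf_ren E ren_iterAll.
exists n.+1, (ren (iter n upren (fun k => if k == X then 0%N else k.+1)) \o sg).
split; first by move=> k; apply: Q_ren.
rewrite ren_subst mkAll_atomic //; by case: n {E}.
Qed.

Lemma mkAll_TAll (x z : ty) : mkAll x = TAll z -> x = z.
Proof. by case: x => //= [k [<-]|u r [<-]|r [<-]]. Qed.

Lemma inst_step (H10 : (1 : S) != 0) (A B t r s u : ty) X :
  Pinv (TArr A B) t -> teq t (tall X s) -> teq r (subst1 s u X) -> is_unit u ->
  Pinv (TArr A B) r.
Proof.
move=> [n [sg [Hs E]]] Ht Hr Hu.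
have E2 := teq_sound H10 Ht; rewrite E in E2.
case: n E E2 => [|m] E E2.
  by move: E2; rewrite /tall /=; case: (cf _).
have E3 : cf (ren (fun k => if k == X then 0%N else k.+1) s) =
          iter m (@TAll S) (subst sg (TArr A B)).
  apply: mkAll_TAll.
  change (cf (tall X s) = iter m.+1 (@TAll S) (subst sg (TArr A B))).
  by rewrite E2.
pose tau := fun k => if k is k'.+1 then TV k' else u.
have Es : subst1 s u X =
    subst tau (ren (fun k => if k == X then 0%N else k.+1) s).
  rewrite /subst1 subst_ren; apply: subst_ext => k /=.
  by case: eqP.
have Qtau : Qf (@cf S \o tau) by case=> [|k] //=; exact: (cf_Q H10 Hu).
rewrite /Pinv (teq_sound H10 Hr) Es cf_subst; last first.
  by case=> [|k] //=; case/andP: (proj1 (cf_wf u) Hu).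
rewrite E3 subst_iterAll subst_subst.
exists m, (subst (iter m (@upsub S) (@cf S \o tau)) \o sg); split => //.
by move=> k; apply: Q_subst => //; apply: Q_iter_upsub.
Qed.

Lemma chain (H10 : (1 : S) != 0) (A B t q : ty) :
  preceq t q -> Pinv (TArr A B) t -> Pinv (TArr A B) q.
Proof.
elim=> {t q} // t r q [_ [_ [[X HX]|[X [s [u [_ [Hu [H1 H2]]]]]]]]] _ IH P;
  apply: IH.
- exact: gen_step HX.
- exact: inst_step H1 H2 Hu.
Qed.

Lemma cf_subst1 (t w : ty) X : is_unit w ->
  cf (subst1 t w X) = subst1 (cf t) (cf w) X.
Proof.
move=> Hw; rewrite /subst1 cf_subst.
  by apply: subst_ext => k /=; case: eqP.
by move=> k /=; case: eqP => _ //; case/andP: (proj1 (cf_wf w) Hw).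
Qed.

Lemma cf_msubst (Ws : seq ty) : forall (t : ty) Xs, all (@is_unit S) Ws ->
  cf (msubst t Ws Xs) = msubst (cf t) (map (@cf S) Ws) Xs.
Proof.
elim: Ws => [|w Ws IH] t [|X Xs] //= /andP[Hw Hall].
change (cf (msubst (subst1 t w X) Ws Xs) = msubst (subst1 (cf t) (cf w) X) (map (@cf S) Ws) Xs).
by rewrite IH // cf_subst1.
Qed.

Lemma msubst_wf (Ws : seq ty) : forall (t : ty) Xs, all (@is_unit S) Ws ->
  is_type t -> is_type (msubst t Ws Xs).
Proof.
elim: Ws => [|w Ws IH] t [|X Xs] //= /andP[Hw Hall] Ht.
change (is_type (msubst (subst1 t w X) Ws Xs)).
apply: IH => //; apply: (proj2 (subst_wf _ _)) => // k.
by case: eqP.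
Qed.

End Lemmas2.

Local Close Scope ring_scope.
Unset Implicit Arguments.

Theorem mainTheorem16 (S : comPzRingType) (U V T R : ty S) :
  is_unit U -> is_unit V -> is_type T -> is_type R ->
  preceq (TArr V R) (TArr U T) ->
  exists (Ws : seq (ty S)) (Xs : seq nat),
    size Ws = size Xs /\ all (@is_unit S) Ws /\
    teq (TArr U T) (msubst (TArr V R) Ws Xs).
Proof.
move=> HU HV HT HR Hp.
have HUT : is_type (TArr U T) by rewrite /= HU HT.
have HVR : is_type (TArr V R) by rewrite /= HV HR.
case: (eqVneq (1 : S) 0)%R => H10.
  exists [::], [::]; split => //; split => //.
  have Z : forall t : ty S, is_type t -> teq t (TZero S).
    move=> t Ht; apply: teq_trans (teq_sym (teq_one_scal Ht)) _.
    rewrite H10; exact: teq_zero_scal.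
  exact: teq_trans (Z _ HUT) (teq_sym (Z _ HVR)).
have P0 : Pinv (TArr (cf V) (cf R)) (TArr V R).
  by exists 0%N, (TVar S); split => //=; rewrite !subst_id.
have [n [sg [Hs E]]] := chain H10 Hp P0.
case: n E => [|m] /= E; last by [].
have [Ws [Xs [Hsz [Hall [Hcf Hm]]]]] := simul (TArr (cf V) (cf R)) Hs.
exists Ws, Xs; split => //; split => //.
apply: teq_complete => //; first exact: msubst_wf.
by rewrite cf_msubst // Hcf Hm.
Qed.
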